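(* For all positive integers $n$ and all nonnegative integers $d_1 \le d_2$, we have $\mathsf{maxR}(n,d_1) \le \mathsf{maxR}(n,d_2)$.
   Context: $\mathsf{WR}(f)$ is the Waring rank of a homogeneous $f\in\mathbb{C}[x_1,\dots,x_n]_d$: the smallest $r$ with $f=\sum_{k=1}^r\ell_k^d$ for linear forms $\ell_k$. $\mathsf{maxR}(n,d) = \max\{\mathsf{WR}(f) \mid f \in \mathbb{C}[x_1,\dots,x_n]_d\}$ is the maximum Waring rank of a degree-$d$ form in $n$ variables. *)

(* Defs.v *)
From Stdlib Require Import ClassicalEpsilon.
From Stdlib Require Rdefinitions.
From HB Require Import structures.
From mathcomp Require Import all_boot all_order all_algebra.
From mathcomp Require Import complex.
From mathcomp Require Import Rstruct.
From mathcomp Require Import mpoly.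

Set Implicit Arguments.
Unset Strict Implicit.
Unset Printing Implicit Defensive.

Import GRing.Theory Num.Theory.
Local Open Scope ring_scope.

Definition CC : Type := complex Rdefinitions.R.

Definition linear_form (n : nat) (l : {mpoly CC[n]}) : Prop := l \is 1.-homog.

(* f is a sum of r d-th powers of linear forms, with coefficients
   (coefficients are absorbed into the linear forms when d >= 1 over C;
   they matter only for the convention in degree 0). *)
Definition waring_decomp (n d : nat) (f : {mpoly CC[n]}) (r : nat) : Prop :=
  exists (c : 'I_r -> CC) (l : 'I_r -> {mpoly CC[n]}),
    (forall k, linear_form (l k)) /\ f = \sum_(k < r) c k *: (l k) ^+ d.

Definition asb (P : Prop) : bool :=
  if excluded_middle_informative P then true else false.

(* Waring rank: the least r admitting a decomposition (0 if none exists,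
   which never happens for homogeneous f of degree d). *)
Definition WR (n d : nat) (f : {mpoly CC[n]}) : nat :=
  match excluded_middle_informative
          (exists r, asb (@waring_decomp n d f r)) with
  | left H => ex_minn H
  | right _ => 0%N
  end.

(* maxR(n,d): the maximum of WR over forms of degree d in n variables,
   i.e. the least upper bound in nat (0 if unbounded, which never happens). *)
Definition maxR (n d : nat) : nat :=
  match excluded_middle_informative
          (exists m, asb (forall f : {mpoly CC[n]}, f \is d.-homog ->
                                     (@WR n d f <= m)%N)) with
  | left H => ex_minn H
  | right _ => 0%N
  end.

(* Main.v *)
Require Import Defs.
From Stdlib Require Import ClassicalEpsilon.
From mathcomp Require Import all_boot all_order all_algebra complex Rstruct mpoly.
Set Implicit Arguments.
Unset Strict Implicit.
Unset Printing Implicit Defensive.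
Import GRing.Theory Num.Theory.
Local Open Scope ring_scope.

Definition spanS n d (g : {mpoly CC[n]}) (s : seq (CC * {mpoly CC[n]})) : Prop :=
  (forall p, p \in s -> linear_form p.2) /\ g = \sum_(p <- s) p.1 *: p.2 ^+ d.

Definition inspan n d (g : {mpoly CC[n]}) := exists s, @spanS n d g s.

Lemma spanS_nil n d : @spanS n d 0 [::].
Proof. by split => //; rewrite big_nil. Qed.

Lemma spanS_cat n d g h s t : @spanS n d g s -> spanS d h t -> spanS d (g + h) (s ++ t).
Proof.
move=> [Ls ->] [Lt ->]; split; last by rewrite big_cat.
by move=> p; rewrite mem_cat => /orP[/Ls|/Lt].
Qed.

Definition scl n (c : CC) (s : seq (CC * {mpoly CC[n]})) :=
  [seq (c * p.1, p.2) | p <- s].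

Lemma spanS_scale n d g s c : @spanS n d g s -> spanS d (c *: g) (scl c s).
Proof.
move=> [Ls ->]; split.
  by move=> p /mapP[q /Ls Hq ->].
by rewrite big_map scaler_sumr; apply: eq_bigr => p _; rewrite scalerA.
Qed.

Lemma size_scl n c s : size (@scl n c s) = size s.
Proof. by rewrite size_map. Qed.

Lemma spanS_sum n d (I : Type) (r : seq I) (G : I -> {mpoly CC[n]}) T :
  (forall i, spanS d (G i) (T i)) ->
  spanS d (\sum_(i <- r) G i) (flatten (map T r)).
Proof.
move=> H; elim: r => [|i r IH]; first by rewrite big_nil; exact: spanS_nil.
by rewrite big_cons /=; apply: spanS_cat.
Qed.

Lemma inspan0 n d : @inspan n d 0.
Proof. by exists [::]; apply: spanS_nil. Qed.

Lemma inspanD n d g h : @inspan n d g -> inspan d h -> inspan d (g + h).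
Proof. by move=> [s Hs] [t Ht]; exists (s ++ t); apply: spanS_cat. Qed.

Lemma inspanZ n d g c : @inspan n d g -> inspan d (c *: g).
Proof. by move=> [s Hs]; exists (scl c s); apply: spanS_scale. Qed.

Lemma inspan_sum n d (I : Type) (r : seq I) (G : I -> {mpoly CC[n]}) :
  (forall i, inspan d (G i)) -> inspan d (\sum_(i <- r) G i).
Proof.
move=> H; elim: r => [|i r IH]; first by rewrite big_nil; exact: inspan0.
by rewrite big_cons; apply: inspanD.
Qed.

Lemma inspan_pow n d (l : {mpoly CC[n]}) : linear_form l -> inspan d (l ^+ d).
Proof.
move=> Hl; exists [:: (1, l)]; split; first by move=> p; rewrite inE => /eqP ->.
by rewrite big_seq1 scale1r.
Qed.

Lemma lin0 n : linear_form (0 : {mpoly CC[n]}).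
Proof. exact: dhomog0. Qed.

Lemma spanS_waring n d g s : @spanS n d g s -> waring_decomp d g (size s).
Proof.
move=> [Ls ->]; exists (fun k => (nth (0, 0) s k).1), (fun k => (nth (0, 0) s k).2).
split.
  move=> k; apply: Ls; exact: mem_nth.
by rewrite (big_nth (0, 0)) big_mkord.
Qed.

Lemma asbT (P : Prop) : P -> asb P.
Proof. by rewrite /asb; case: excluded_middle_informative. Qed.

Lemma asbP (P : Prop) : asb P -> P.
Proof. by rewrite /asb; case: excluded_middle_informative. Qed.

Lemma WR_le n d g r : @waring_decomp n d g r -> (WR d g <= r)%N.
Proof.
move=> H; rewrite /WR; case: excluded_middle_informative => [E|N].
  by case: ex_minnP => m _ /(_ r (asbT H)).
by exfalso; apply: N; exists r; apply: asbT.
Qed.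

Lemma WR_spec n d g r : @waring_decomp n d g r -> waring_decomp d g (WR d g).
Proof.
move=> H; rewrite /WR; case: excluded_middle_informative => [E|N].
  by case: ex_minnP => m /asbP.
by exfalso; apply: N; exists r; apply: asbT.
Qed.

Lemma maxR_le n d M : (forall f : {mpoly CC[n]}, f \is d.-homog -> (WR d f <= M)%N) ->
  (maxR n d <= M)%N.
Proof.
move=> H; rewrite /maxR; case: excluded_middle_informative => [E|N].
  by case: ex_minnP => m _ /(_ M (asbT H)).
by [].
Qed.

Lemma maxR_ge n d M : (forall f : {mpoly CC[n]}, f \is d.-homog -> (WR d f <= M)%N) ->
  forall f : {mpoly CC[n]}, f \is d.-homog -> (WR d f <= maxR n d)%N.
Proof.
move=> H; rewrite /maxR; case: excluded_middle_informative => [E|N].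
  by case: ex_minnP => m /asbP.
by exfalso; apply: N; exists M; apply: asbT.
Qed.

Lemma linD n (l k : {mpoly CC[n]}) : linear_form l -> linear_form k -> linear_form (l + k).
Proof. exact: dhomogD. Qed.
Lemma linZ n (l : {mpoly CC[n]}) c : linear_form l -> linear_form (c *: l).
Proof. exact: dhomogZ. Qed.

Lemma VL n (l k : {mpoly CC[n]}) a b : linear_form l -> linear_form k ->
  inspan (a + b) (l ^+ a * k ^+ b).
Proof.
move=> Hl Hk; set D := (a + b)%N.
pose w (i : 'I_D.+1) := k ^+ (D - i) * l ^+ i *+ 'C(D, i).
have Ev t : (k + t *: l) ^+ D = \sum_(i < D.+1) t ^+ i *: w i.
  rewrite exprDn; apply: eq_bigr => i _.
  by rewrite exprZn -scalerAr scalerMnr.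
pose pts : 'rV[CC]_(D.+1) := \row_(j < D.+1) (j%:R : CC).
pose V := Vandermonde D.+1 pts.
have HV : V \in unitmx.
  rewrite unitmxE det_Vandermonde unitfE.
  apply/prodf_neq0 => i _; apply/prodf_neq0 => j ltij.
  rewrite !mxE subr_eq0 eqr_nat; apply/negP => /eqP E.
  by move: ltij; rewrite E ltnn.
pose U := invmx V.
have Ew (a' : 'I_D.+1) : w a' = \sum_(j < D.+1) U j a' *: (k + (j%:R : CC) *: l) ^+ D.
  have Ej (j : 'I_D.+1) : U j a' *: (k + (j%:R : CC) *: l) ^+ D =
     \sum_(i < D.+1) (U j a' * (j%:R : CC) ^+ i) *: w i.
    by rewrite Ev scaler_sumr; apply: eq_bigr => i _; rewrite scalerA.
  under eq_bigr => j _ do rewrite Ej.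
  rewrite exchange_big /=.
  have VU := mulmxV HV.
  rewrite (bigD1 a') //= [X in _ + X]big1 ?addr0.
    rewrite -scaler_suml.
    have -> : \sum_(j < D.+1) U j a' * (j%:R : CC) ^+ a' = (V *m U) a' a'.
      by rewrite mxE; apply: eq_bigr => j _; rewrite !mxE mulrC.
    by rewrite VU mxE eqxx scale1r.
  move=> i ne; rewrite -scaler_suml.
  have -> : \sum_(j < D.+1) U j a' * (j%:R : CC) ^+ i = (V *m U) i a'.
    by rewrite mxE; apply: eq_bigr => j _; rewrite !mxE mulrC.
  by rewrite VU mxE (negbTE ne) scale0r.
have ltaD : (a < D.+1)%N by rewrite ltnS leq_addr.
pose a' := Ordinal ltaD.
have Hw : inspan D (w a').
  rewrite Ew; apply: inspan_sum => j; apply: inspanZ; apply: inspan_pow.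
  by apply: linD => //; apply: linZ.
have -> : l ^+ a * k ^+ b = ('C(D, a)%:R : CC)^-1 *: w a'.
  rewrite /w /= -(scaler_nat 'C(D, a) (k ^+ (D - a) * l ^+ a)) scalerA mulVf ?scale1r.
    by rewrite /D addKn mulrC.
  by rewrite pnatr_eq0 -lt0n bin_gt0 leq_addr.
exact: inspanZ.
Qed.

Lemma inspan_big n d (I : Type) (r : seq I) (P : pred I) (G : I -> {mpoly CC[n]}) :
  (forall i, P i -> inspan d (G i)) -> inspan d (\sum_(i <- r | P i) G i).
Proof. by move=> H; apply: big_ind => //; [exact: inspan0 | exact: inspanD]. Qed.

Lemma inspanM n a b (g h : {mpoly CC[n]}) :
  inspan a g -> inspan b h -> inspan (a + b) (g * h).
Proof.
move=> [s [Ls ->]] [t [Lt ->]]; rewrite big_distrl /= big_seq.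
apply: inspan_big => p ps; rewrite big_distrr /= big_seq.
apply: inspan_big => q qt.
rewrite -scalerAl -scalerAr scalerA; apply: inspanZ.
by apply: VL; [apply: Ls | apply: Lt].
Qed.

Lemma linX n (i : 'I_n) : linear_form ('X_i : {mpoly CC[n]}).
Proof. by rewrite /linear_form dhomogX; apply/eqP; apply: mdeg1. Qed.

Lemma inspan_mon n (m : 'X_{1..n}) : inspan (mdeg m) ('X_[m] : {mpoly CC[n]}).
Proof.
rewrite mpolyXE_id mdegE.
apply: (big_rec2 (fun a (g : {mpoly CC[n]}) => inspan a g)).
  by rewrite -(expr0 (0 : {mpoly CC[n]})); apply: inspan_pow; exact: lin0.
move=> i a g _ H; apply: inspanM => //; apply: inspan_pow; exact: linX.
Qed.

Lemma msize_homog n d (f : {mpoly CC[n]}) : f \is d.-homog -> (msize f <= d.+1)%N.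
Proof.
move=> Hf; rewrite msizeE; apply/bigmax_leqP_seq => m Hm _.
by rewrite (dhomog_mf Hf Hm).
Qed.

Lemma bounded n d : exists M, forall f : {mpoly CC[n]}, f \is d.-homog ->
  exists s, spanS d f s /\ size s = M.
Proof.
have : forall m : 'X_{1..n < d.+1}, exists s : seq (CC * {mpoly CC[n]}),
    (forall p, p \in s -> linear_form p.2) /\
    (mdeg m = d -> 'X_[m] = \sum_(p <- s) p.1 *: p.2 ^+ d).
  move=> m; case: (eqVneq (mdeg m) d) => [E|N].
    have [s [Ls Es]] : inspan d ('X_[m] : {mpoly CC[n]}) 
      by have := inspan_mon (n := n) m; rewrite E.
    by exists s; split.
  by exists [::]; split => // E; rewrite E eqxx in N.
case/fin_all_exists => S HS.
exists (size (flatten (map S (index_enum 'X_{1..n < d.+1})))).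
move=> f Hf.
exists (flatten (map (fun m : 'X_{1..n < d.+1} => scl f@_m (S m)) (index_enum 'X_{1..n < d.+1}))); split.
  rewrite {1}(mpolywE (msize_homog Hf)).
  apply: spanS_sum => m.
  case: (eqVneq (mdeg m) d) => [E|N].
    have [Ls Es] := HS m; apply: spanS_scale; split => //; exact: Es.
  have [Ls _] := HS m.
  have -> : f@_m = 0 by apply: (dhomog_nemf_coeff Hf).
  split; first by move=> p /mapP[q /Ls Hq ->].
  by rewrite scale0r big_map big1 // => p _; rewrite mul0r scale0r.
rewrite !size_flatten /shape -!map_comp; congr sumn; apply: eq_map => m /=.
exact: size_scl.
Qed.

Lemma deriv_lin n (i : 'I_n) (l : {mpoly CC[n]}) : linear_form l ->
  exists c, l^`M(i) = c%:MP.
Proof.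
move=> Hl.
have H0 : l^`M(i) \is 0.-homog.
  rewrite (mderivwE i (leqnn (msize l))).
  apply: (big_ind (fun p : {mpoly CC[n]} => p \is 0.-homog)); [exact: dhomog0 | exact: dhomogD | move=> m _].
  case: (eqVneq l@_m 0) => [->|nz]; first by rewrite mulr0 scale0r dhomog0.
  have Hm : mdeg m = 1%N by apply: (dhomog_mf Hl); rewrite mcoeff_msupp.
  case: (eqVneq (m i) 0%N) => [->|nzi]; first by rewrite mul0r scale0r dhomog0.
  apply: dhomogZ; rewrite dhomogX; apply/eqP.
  have le : (U_(i) <= m)%MM by rewrite lep1mP.
  have := mdegD (m - U_(i)) U_(i); rewrite submK // Hm mdeg1.
  by move=> /eqP; rewrite -addn1 eqn_add2r => /eqP E; exact: (esym E).
exists (l^`M(i))@_0; apply: msize1_polyC.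
exact: (msize_homog H0).
Qed.

Lemma deriv_pow n (i : 'I_n) (l : {mpoly CC[n]}) c k :
  l^`M(i) = c%:MP -> (l ^+ k.+1)^`M(i) = (c * k.+1%:R) *: l ^+ k.
Proof.
move=> H; elim: k => [|k IH].
  by rewrite expr1 expr0 H mulr1 -mul_mpolyC mulr1.
rewrite exprS mderivM IH H mul_mpolyC -scalerAr -exprS -scalerDl.
by congr (_ *: _); rewrite [(k.+2)%:R]mulrSr mulrDr mulr1 addrC.
Qed.

Lemma waring_deriv n d (i : 'I_n) (F : {mpoly CC[n]}) r :
  waring_decomp d.+1 F r -> waring_decomp d (F^`M(i)) r.
Proof.
case=> c [l [Hl ->]].
have : forall k, exists e, (l k)^`M(i) = e%:MP by move=> k; apply: deriv_lin.
case/fin_all_exists => e He.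
exists (fun k => c k * (e k * d.+1%:R)), l; split => //.
rewrite (big_morph _ (mderivD i) (mderiv0 CC i)); apply: eq_bigr => k _.
by rewrite mderivZ (deriv_pow _ (He k)) scalerA.
Qed.

Lemma antideriv n d (i : 'I_n) (f : {mpoly CC[n]}) : f \is d.-homog ->
  exists F : {mpoly CC[n]}, F \is d.+1.-homog /\ F^`M(i) = f.
Proof.
move=> Hf.
exists (\sum_(m <- msupp f) (f@_m / (m i).+1%:R) *: 'X_[m + U_(i)]); split.
  rewrite big_seq; apply: (big_ind (fun p : {mpoly CC[n]} => p \is d.+1.-homog)); [exact: dhomog0 | exact: dhomogD | move=> m Hm].
  apply: dhomogZ; rewrite dhomogX; apply/eqP.
  have := mdegD m U_(i); rewrite mdeg1 (dhomog_mf Hf Hm) addn1 => E; exact: E.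
rewrite (big_morph _ (mderivD i) (mderiv0 CC i)) {3}(mpolyE f).
apply: eq_bigr => m _.
rewrite mderivZ mderivX mnmDE mnm1E eqxx addmK scalerA addn1 divfK //.
by rewrite pnatr_eq0.
Qed.

Lemma maxR_step n d : (0 < n)%N -> (maxR n d <= maxR n d.+1)%N.
Proof.
move=> n0; pose i := Ordinal n0.
have [M HM] := bounded n d.+1.
have Hb : forall f : {mpoly CC[n]}, f \is d.+1.-homog -> (WR d.+1 f <= M)%N.
  by move=> f Hf; have [s [Hs <-]] := HM f Hf; exact: WR_le (spanS_waring Hs).
apply: maxR_le => f Hf.
have [F [HF <-]] := antideriv i Hf.
have [s [Hs _]] := HM F HF.
have W := WR_spec (spanS_waring Hs).
apply: leq_trans (WR_le (waring_deriv i W)) _.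
exact: maxR_ge Hb F HF.
Qed.

Theorem proposition12 (n d1 d2 : nat) :
  (0 < n)%N -> (d1 <= d2)%N -> (maxR n d1 <= maxR n d2)%N.
Proof.
move=> n0; elim: d2 => [|d2 IH] le.
  by move: le; rewrite leqn0 => /eqP ->.
move: le; rewrite leq_eqVlt => /orP[/eqP -> //|].
rewrite ltnS => /IH H; apply: leq_trans H _; exact: maxR_step.
Qed.
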